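(* Let $R$ be a unital associative ring. For every $A\in\widehat{\cal S}$ there is $x=x(A)\in R^*$ such that $\Phi^2(A)=x^{-1}\Phi^{-1}(A)x$. In particular, $\Phi^2(A)\sim\Phi^{-1}(A)$.
   Context: $R^*$: units of $R$. $M_3^*(R)$: invertible $3\times3$ matrices; $M_3^\star(R)$: matrices with all entries in $R^*$. $J_1(M)=M^{-1}$ on $M_3^*(R)$; $J_2(M)_{jk}=(M_{kj})^{-1}$ on $M_3^\star(R)$; $J=J_2\circ J_1$, $J^{-1}=J_1\circ J_2$, where $g\circ f$ has domain $\{x\in{\rm dom}(f):f(x)\in{\rm dom}(g)\}$. $\widehat M_3(R)$: matrices whose first row and column consist of $1$'s. For $A=\{a_{j,k}\}\in M_3^\star(R)$: $\Lambda^L(A)_{j,k}=a_{1,1}a_{j,1}^{-1}a_{j,k}a_{1,k}^{-1}$, $\Lambda^R(A)_{j,k}=a_{j,1}^{-1}a_{j,k}a_{1,k}^{-1}a_{1,1}$. $\Phi(A)=J_2(\Lambda^L(A^{-1}))$ with ${\rm dom}(\Phi)={\rm dom}(J)\cap\widehat M_3(R)\cap M_3^\star(R)$; $\Phi^2=\Phi\circ\Phi$; $\Phi^{-1}(A)=\Lambda^R(J^{-1}(A))$ with domain $\widehat M_3(R)\cap\{M\in{\rm dom}(J^{-1}):J^{-1}(M)\in M_3^\star(R)\}$. ${\cal S}=\{M\in M_3(R):$ all square submatrices of $M$ are invertible and $J_2(M)$ is invertible$\}$, $\widehat{\cal S}={\cal S}\cap\widehat M_3(R)$. For a matrix $B$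 and $x\in R^*$, $x^{-1}Bx$ is the matrix with entries $x^{-1}B_{jk}x$. $A\sim B$ means $B=D_1^{-1}AD_2$ for invertible diagonal $D_1,D_2$. *)

(* Defs.v *)
(* R : unitRingType = unital associative (possibly non-commutative) ring,
   R^* = {x | x \is a GRing.unit}. Partial maps are modelled as option-valued functions. *)
From HB Require Import structures.
From mathcomp Require Import all_boot all_order all_algebra.
From Stdlib Require Import ClassicalEpsilon.
Set Implicit Arguments. Unset Strict Implicit. Unset Printing Implicit Defensive.
Import GRing.Theory.
Local Open Scope ring_scope.

Section Defs.
Variable R : unitRingType.

Definition mx_invertible n (M : 'M[R]_n) : Prop :=
  exists N : 'M[R]_n, M *m N = 1%:M /\ N *m M = 1%:M.

(* J_1(M) = M^{-1}, defined on M_3^*(R) (the two-sided inverse is unique) *)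
Definition J1 (M : 'M[R]_3) : option 'M[R]_3 :=
  match excluded_middle_informative (exists N : 'M[R]_3, M *m N = 1%:M /\ N *m M = 1%:M) with
  | left h => Some (proj1_sig (constructive_indefinite_description _ h))
  | right _ => None
  end.

(* M_3^star(R): all entries are units *)
Definition allunit (M : 'M[R]_3) : bool := [forall i, forall j, M i j \is a GRing.unit].

Definition J2 (M : 'M[R]_3) : option 'M[R]_3 :=
  if allunit M then Some (\matrix_(j, k) (M k j)^-1) else None.

Definition J (M : 'M[R]_3) : option 'M[R]_3 :=
  match J1 M with Some B => J2 B | None => None end.
Definition Jinv (M : 'M[R]_3) : option 'M[R]_3 :=
  match J2 M with Some B => J1 B | None => None end.

(* \hat M_3(R): first row and first column consist of 1's (index 0 = "1") *)
Definition hatM (M : 'M[R]_3) : bool := [forall i, (M 0 i == 1) && (M i 0 == 1)].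

Definition LamL (A : 'M[R]_3) : 'M[R]_3 :=
  \matrix_(j, k) (A 0 0 * (A j 0)^-1 * A j k * (A 0 k)^-1).
Definition LamR (A : 'M[R]_3) : 'M[R]_3 :=
  \matrix_(j, k) ((A j 0)^-1 * A j k * (A 0 k)^-1 * A 0 0).

(* Phi(A) = J_2(Lambda^L(A^{-1})), dom = dom(J) ∩ \hat M_3 ∩ M_3^star *)
Definition Phi (A : 'M[R]_3) : option 'M[R]_3 :=
  if hatM A && allunit A then
    match J1 A with
    | Some B => if allunit B then J2 (LamL B) else None
    | None => None
    end
  else None.

Definition Phi2 (A : 'M[R]_3) : option 'M[R]_3 :=
  match Phi A with Some B => Phi B | None => None end.

(* Phi^{-1}(A) = Lambda^R(J^{-1}(A)), dom = \hat M_3 ∩ {M in dom J^{-1} : J^{-1}(M) in M_3^star} *)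
Definition PhiInv (A : 'M[R]_3) : option 'M[R]_3 :=
  if hatM A then
    match Jinv A with
    | Some B => if allunit B then Some (LamR B) else None
    | None => None
    end
  else None.

(* S: all square submatrices invertible and J_2(M) (defined and) invertible *)
Definition inS (M : 'M[R]_3) : Prop :=
  (forall (k : nat) (f g : 'I_k -> 'I_3),
      {homo f : i j / (i < j)%N} -> {homo g : i j / (i < j)%N} ->
      mx_invertible (mxsub f g M)) /\
  (exists N, J2 M = Some N /\ mx_invertible N).

Definition inShat (M : 'M[R]_3) : Prop := inS M /\ hatM M.

Definition conjx (x : R) (B : 'M[R]_3) : 'M[R]_3 := \matrix_(j, k) (x^-1 * B j k * x).

Definition mxsim (A B : 'M[R]_3) : Prop :=
  exists D1 D1' D2 : 'M[R]_3,
    is_diag_mx D1 /\ is_diag_mx D2 /\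
    D1 *m D1' = 1%:M /\ D1' *m D1 = 1%:M /\ mx_invertible D2 /\
    B = D1' *m A *m D2.
End Defs.

(* Main.v *)
Require Import Defs.
From mathcomp Require Import all_boot all_order all_algebra.
From Stdlib Require Import ClassicalEpsilon.
From Stdlib Require Ncring Ncring_tac.
Import GRing.Theory.
Local Open Scope ring_scope.

Section NC.
Variable R : unitRingType.
#[global] Instance R_ops : @Ncring.Ring_ops R 0 1 (@GRing.add R) (@GRing.mul R) (fun x y => x - y) (@GRing.opp R) (@eq R) := {}.
#[global] Instance R_ring : @Ncring.Ring R 0 1 (@GRing.add R) (@GRing.mul R) (fun x y => x - y) (@GRing.opp R) (@eq R) R_ops.
Proof.
constructor; cbv [Algebra_syntax.equality Ncring.eq_notation Algebra_syntax.addition Ncring.add_notation Algebra_syntax.multiplication Ncring.mul_notation Algebra_syntax.zero Ncring.zero_notation Algebra_syntax.one Ncring.one_notation Algebra_syntax.opposite Ncring.opp_notation Algebra_syntax.subtraction Ncring.sub_notation].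
- exact: RelationClasses.eq_equivalence.
- by move=> x y -> x' y' ->.
- by move=> x y -> x' y' ->.
- by move=> x y -> x' y' ->.
- by move=> x y ->.
- by move=> x; rewrite add0r.
- by move=> x y; rewrite addrC.
- by move=> *; rewrite addrA.
- by move=> x; rewrite mul1r.
- by move=> x; rewrite mulr1.
- by move=> *; rewrite mulrA.
- by move=> *; rewrite mulrDl.
- by move=> *; rewrite mulrDr.
- by [].
- by move=> x; rewrite subrr.
Defined.

Lemma certE (x y e : R) : x - y = e -> e = 0 -> x = y.
Proof. by move=> h1 h2; apply/eqP; rewrite -subr_eq0 h1 h2. Qed.
Lemma eq_sub0 {x y : R} : x = y -> x - y = 0.
Proof. by move=> ->; rewrite subrr. Qed.

Ltac cert e := apply: (@certE _ _ e); [Ncring_tac.non_commutative_ring|].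
Ltac clean := rewrite ?(mulr0, mul0r, oppr0, addr0, add0r, subr0, sub0r).

Lemma two_inv {x y : R} : x * y = 1 -> y * x = 1 -> x \is a GRing.unit /\ x^-1 = y.
Proof.
move=> h1 h2; have Ux : x \is a GRing.unit by apply/unitrP; exists y.
split=> //; by rewrite -[x^-1]mulr1 -h1 mulKr.
Qed.


Lemma uM (x y : R) : x \is a GRing.unit -> y \is a GRing.unit -> x * y \is a GRing.unit.
Proof. by move=> ux uy; rewrite unitrMl. Qed.
Lemma uM3 (x y z : R) : x \is a GRing.unit -> y \is a GRing.unit -> z \is a GRing.unit -> x * y * z \is a GRing.unit.
Proof. by move=> ux uy uz; rewrite !uM. Qed.
Lemma uN (x : R) : x \is a GRing.unit -> - x \is a GRing.unit.
Proof. by rewrite unitrN. Qed.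
Lemma uV (x : R) : x \is a GRing.unit -> x^-1 \is a GRing.unit.
Proof. by rewrite unitrV. Qed.

Section Two.
Variables p q r s al be ga de : R.
Hypotheses (h1 : p * al + q * ga = 1) (h2 : p * be + q * de = 0) (h3 : r * al + s * ga = 0)
  (h4 : r * be + s * de = 1) (h5 : al * p + be * r = 1) (h6 : al * q + be * s = 0)
  (h7 : ga * p + de * r = 0) (h8 : ga * q + de * s = 1).
Hypotheses (Up : p \is a GRing.unit) (Uq : q \is a GRing.unit) (Ur : r \is a GRing.unit) (Us : s \is a GRing.unit).

Lemma Ual : al \is a GRing.unit.
Proof.
apply/unitrP; exists (p - q * s^-1 * r); split.
- cert ((p * al + q * ga - 1) - q * s^-1 * (r * al + s * ga - 0) + q * (s^-1 * s - 1) * ga).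
  by rewrite (eq_sub0 h1) (eq_sub0 h3) (eq_sub0 (mulVr Us)); clean.
- cert ((al * p + be * r - 1) - (al * q + be * s - 0) * s^-1 * r + be * (s * s^-1 - 1) * r).
  by rewrite (eq_sub0 h5) (eq_sub0 h6) (eq_sub0 (mulrV Us)); clean.
Qed.

Lemma be_eq : be = - (al * q * s^-1).
Proof. cert ((al * q + be * s - 0) * s^-1 - be * (s * s^-1 - 1)).
by rewrite (eq_sub0 h6) (eq_sub0 (mulrV Us)); clean. Qed.
Lemma ga_eq : ga = - (s^-1 * r * al).
Proof. cert (s^-1 * (r * al + s * ga - 0) - (s^-1 * s - 1) * ga).
by rewrite (eq_sub0 h3) (eq_sub0 (mulVr Us)); clean. Qed.
Lemma de_eq : de = - (q^-1 * p * be).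
Proof. cert (q^-1 * (p * be + q * de - 0) - (q^-1 * q - 1) * de).
by rewrite (eq_sub0 h2) (eq_sub0 (mulVr Uq)); clean. Qed.
Lemma ga_eq' : ga = - (de * r * p^-1).
Proof. cert ((ga * p + de * r - 0) * p^-1 - ga * (p * p^-1 - 1)).
by rewrite (eq_sub0 h7) (eq_sub0 (mulrV Up)); clean. Qed.
Lemma Ube : be \is a GRing.unit.
Proof. by rewrite be_eq uN // uM3 // ?uV // Ual. Qed.
Lemma Uga : ga \is a GRing.unit.
Proof. by rewrite ga_eq uN // uM3 // ?uV // Ual. Qed.
Lemma Ude : de \is a GRing.unit.
Proof. by rewrite de_eq uN // uM3 // ?uV // Ube. Qed.

Lemma albe_eq : al + be = al * (s - q) * s^-1.
Proof. cert ((al * q + be * s - 0) * s^-1 - be * (s * s^-1 - 1) - al * (s * s^-1 - 1)).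
by rewrite (eq_sub0 h6) (eq_sub0 (mulrV Us)); clean. Qed.
Lemma alga_eq : al + ga = s^-1 * (s - r) * al.
Proof. cert (s^-1 * (r * al + s * ga - 0) - (s^-1 * s - 1) * ga - (s^-1 * s - 1) * al).
by rewrite (eq_sub0 h3) (eq_sub0 (mulVr Us)); clean. Qed.
Lemma bede_eq : be + de = q^-1 * (q - p) * be.
Proof. cert (q^-1 * (p * be + q * de - 0) - (q^-1 * q - 1) * de - (q^-1 * q - 1) * be).
by rewrite (eq_sub0 h2) (eq_sub0 (mulVr Uq)); clean. Qed.
Lemma gade_eq : ga + de = de * (p - r) * p^-1.
Proof. cert ((ga * p + de * r - 0) * p^-1 - ga * (p * p^-1 - 1) - de * (p * p^-1 - 1)).
by rewrite (eq_sub0 h7) (eq_sub0 (mulrV Up)); clean. Qed.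

Hypotheses (Usq : s - q \is a GRing.unit) (Usr : s - r \is a GRing.unit)
  (Uqp : q - p \is a GRing.unit) (Upr : p - r \is a GRing.unit).
Lemma Ualbe : al + be \is a GRing.unit.
Proof. by rewrite albe_eq uM3 // ?uV // Ual. Qed.
Lemma Ualga : al + ga \is a GRing.unit.
Proof. by rewrite alga_eq uM3 // ?uV // Ual. Qed.
Lemma Ubede : be + de \is a GRing.unit.
Proof. by rewrite bede_eq uM3 // ?uV // Ube. Qed.
Lemma Ugade : ga + de \is a GRing.unit.
Proof. by rewrite gade_eq uM3 // ?uV // Ude. Qed.
Lemma F11 : (al + ga) * al^-1 * (al + be) = al + be + ga + de - s^-1.
Proof. cert ((al * al^-1 - 1) * al + (al * al^-1 - 1) * be + ga * (al^-1 * al - 1) + s^-1 * (r * al + s * ga - 0) * al^-1 * be - (s^-1 * s - 1) * ga * al^-1 * be - s^-1 * r * (al * al^-1 - 1) * be - s^-1 * (r * be + s * de - 1) + (s^-1 * s - 1) * de).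
by rewrite (eq_sub0 (mulrV Ual)) (eq_sub0 (mulVr Ual)) (eq_sub0 h3) (eq_sub0 h4) (eq_sub0 (mulVr Us)); clean. Qed.
Lemma QQ1 : s^-1 * (-(r * al * q)) + q^-1 * (p * al * q) = 1.
Proof. cert (-s^-1 * (r * al + s * ga - 0) * q + (s^-1 * s - 1) * ga * q + q^-1 * (p * al + q * ga - 1) * q - (q^-1 * q - 1) * ga * q + (q^-1 * q - 1)).
by rewrite (eq_sub0 h1) (eq_sub0 h3) (eq_sub0 (mulVr Us)) (eq_sub0 (mulVr Uq)); clean. Qed.
Lemma QQ2 : s^-1 * (r * al * p) + q^-1 * (p * be * r) = 0.
Proof. cert (s^-1 * (r * al + s * ga - 0) * p - (s^-1 * s - 1) * ga * p + q^-1 * (p * be + q * de - 0) * r - (q^-1 * q - 1) * de * r - (ga * p + de * r - 0)).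
by rewrite (eq_sub0 h2) (eq_sub0 h3) (eq_sub0 h7) (eq_sub0 (mulVr Us)) (eq_sub0 (mulVr Uq)); clean. Qed.
Lemma QQ3 : r^-1 * (-(r * al * q)) + p^-1 * (p * al * q) = 0.
Proof. cert (-(r^-1 * r - 1) * al * q + (p^-1 * p - 1) * al * q).
by rewrite (eq_sub0 (mulVr Ur)) (eq_sub0 (mulVr Up)); clean. Qed.
Lemma QQ4 : r^-1 * (r * al * p) + p^-1 * (p * be * r) = 1.
Proof. cert ((r^-1 * r - 1) * al * p + (p^-1 * p - 1) * be * r + (al * p + be * r - 1)).
by rewrite (eq_sub0 (mulVr Ur)) (eq_sub0 (mulVr Up)) (eq_sub0 h5); clean. Qed.
Lemma QQ5 : (-(r * al * q)) * s^-1 + (r * al * p) * r^-1 = 1.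
Proof. cert (-r * (al * q + be * s - 0) * s^-1 + r * be * (s * s^-1 - 1) + r * (al * p + be * r - 1) * r^-1 - r * be * (r * r^-1 - 1) + (r * r^-1 - 1)).
by rewrite (eq_sub0 h5) (eq_sub0 h6) (eq_sub0 (mulrV Us)) (eq_sub0 (mulrV Ur)); clean. Qed.
Lemma QQ6 : (-(r * al * q)) * q^-1 + (r * al * p) * p^-1 = 0.
Proof. cert (-r * al * (q * q^-1 - 1) + r * al * (p * p^-1 - 1)).
by rewrite (eq_sub0 (mulrV Uq)) (eq_sub0 (mulrV Up)); clean. Qed.
Lemma QQ7 : (p * al * q) * s^-1 + (p * be * r) * r^-1 = 0.
Proof. cert (p * (al * q + be * s - 0) * s^-1 - p * be * (s * s^-1 - 1) + p * be * (r * r^-1 - 1)).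
by rewrite (eq_sub0 h6) (eq_sub0 (mulrV Us)) (eq_sub0 (mulrV Ur)); clean. Qed.
Lemma QQ8 : (p * al * q) * q^-1 + (p * be * r) * p^-1 = 1.
Proof. cert (p * al * (q * q^-1 - 1) + p * (al * p + be * r - 1) * p^-1 - p * al * (p * p^-1 - 1) + (p * p^-1 - 1)).
by rewrite (eq_sub0 h5) (eq_sub0 (mulrV Uq)) (eq_sub0 (mulrV Up)); clean. Qed.
Lemma S3 : (-(r * al * q)) + (r * al * p) + (p * al * q) + (p * be * r) = p + (p - r) * al * (q - p).
Proof. cert (p * (al * p + be * r - 1)).
by rewrite (eq_sub0 h5); clean. Qed.
Section XR.
Variable sg : R.
Lemma X11 : sg^-1 * (-(r * al * q)) = sg^-1 * (-(r * al)) * al^-1 * (al * q).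
Proof. cert (sg^-1 * r * (al * al^-1 - 1) * al * q).
by rewrite (eq_sub0 (mulrV Ual)); clean. Qed.
Lemma X12 : sg^-1 * (r * al * p) = sg^-1 * (-(r * al)) * ga^-1 * (-(ga * p)).
Proof. cert (-sg^-1 * r * al * (ga^-1 * ga - 1) * p).
by rewrite (eq_sub0 (mulVr Uga)); clean. Qed.
Lemma X21 : sg^-1 * (p * al * q) = sg^-1 * (p * be) * be^-1 * (al * q).
Proof. cert (-sg^-1 * p * (be * be^-1 - 1) * al * q).
by rewrite (eq_sub0 (mulrV Ube)); clean. Qed.
Lemma X22 : sg^-1 * (p * be * r) = sg^-1 * (p * be) * de^-1 * (-(ga * p)).
Proof. cert (sg^-1 * p * be * de^-1 * (ga * p + de * r - 0) - sg^-1 * p * be * (de^-1 * de - 1) * r).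
by rewrite (eq_sub0 h7) (eq_sub0 (mulVr Ude)); clean. Qed.
Lemma X01 : -(sg^-1 * (-(r * al * q)) + sg^-1 * (p * al * q)) = sg^-1 * ((p - r) * (al + be)) * (-(al + be))^-1 * (al * q).
Proof. rewrite invrN. cert (sg^-1 * (p - r) * ((al + be) * (al + be)^-1 - 1) * al * q).
by rewrite (eq_sub0 (mulrV Ualbe)); clean. Qed.
Lemma X02 : -(sg^-1 * (r * al * p) + sg^-1 * (p * be * r)) = sg^-1 * ((p - r) * (al + be)) * (-(ga + de))^-1 * (-(ga * p)).
Proof. rewrite invrN. cert (sg^-1 * (-(r * al + s * ga - 0) * p + (p * al + q * ga - 1) * p - p * (al * p + be * r - 1)) - sg^-1 * (s - q) * ((ga + de) * (ga + de)^-1 - 1) * ga * p - sg^-1 * ((p * al + q * ga - 1) + (p * be + q * de - 0) - (r * al + s * ga - 0) - (r * be + s * de - 1)) * (ga + de)^-1 * ga * p).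
by rewrite (eq_sub0 h1) (eq_sub0 h2) (eq_sub0 h3) (eq_sub0 h4) (eq_sub0 h5) (eq_sub0 (mulrV Ugade)); clean. Qed.
Lemma X10 : -(sg^-1 * (-(r * al * q)) + sg^-1 * (r * al * p)) = sg^-1 * (-(r * al)) * (-(al + ga))^-1 * ((al + ga) * (q - p)).
Proof. rewrite invrN. cert (-sg^-1 * r * al * ((al + ga)^-1 * (al + ga) - 1) * (q - p)).
by rewrite (eq_sub0 (mulVr Ualga)); clean. Qed.
Lemma X20 : -(sg^-1 * (p * al * q) + sg^-1 * (p * be * r)) = sg^-1 * (p * be) * (-(be + de))^-1 * ((al + ga) * (q - p)).
Proof. rewrite invrN. cert (-sg^-1 * p * (al * q + be * s - 0) + sg^-1 * p * be * ((be + de)^-1 * (be + de) - 1) * (r - s) + sg^-1 * p * be * (be + de)^-1 * ((al * q + be * s - 0) - (al * p + be * r - 1) + (ga * q + de * s - 1) - (ga * p + de * r - 0))).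
by rewrite (eq_sub0 h5) (eq_sub0 h6) (eq_sub0 h7) (eq_sub0 h8) (eq_sub0 (mulVr Ubede)); clean. Qed.
Lemma pack_X : [/\ [/\ (sg^-1 * (-(r * al * q)) = sg^-1 * (-(r * al)) * al^-1 * (al * q)), (sg^-1 * (r * al * p) = sg^-1 * (-(r * al)) * ga^-1 * (-(ga * p))), (sg^-1 * (p * al * q) = sg^-1 * (p * be) * be^-1 * (al * q)) & (sg^-1 * (p * be * r) = sg^-1 * (p * be) * de^-1 * (-(ga * p)))] & [/\ (-(sg^-1 * (-(r * al * q)) + sg^-1 * (p * al * q)) = sg^-1 * ((p - r) * (al + be)) * (-(al + be))^-1 * (al * q)), (-(sg^-1 * (r * al * p) + sg^-1 * (p * be * r)) = sg^-1 * ((p - r) * (al + be)) * (-(ga + de))^-1 * (-(ga * p))), (-(sg^-1 * (-(r * al * q)) + sg^-1 * (r * al * p)) = sg^-1 * (-(r * al)) * (-(al + ga))^-1 * ((al + ga) * (q - p))) & (-(sg^-1 * (p * al * q) + sg^-1 * (p * be * r)) = sg^-1 * (p * be) * (-(be + de))^-1 * ((al + ga) * (q - p)))]].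
Proof using All. by split; split; [exact: X11|exact: X12|exact: X21|exact: X22|exact: X01|exact: X02|exact: X10|exact: X20]. Qed.
End XR.

Lemma F12 : (ga + al) * ga^-1 * (ga + de) = ga + de + al + be - r^-1.
Proof. cert ((ga * ga^-1 - 1) * ga + (ga * ga^-1 - 1) * de + al * (ga^-1 * ga - 1) + r^-1 * (r * al + s * ga - 0) * ga^-1 * de - (r^-1 * r - 1) * al * ga^-1 * de - r^-1 * s * (ga * ga^-1 - 1) * de - r^-1 * (r * be + s * de - 1) + (r^-1 * r - 1) * be).
by rewrite (eq_sub0 h3) (eq_sub0 h4) (eq_sub0 (mulrV Uga)) (eq_sub0 (mulVr Uga)) (eq_sub0 (mulVr Ur)); clean. Qed.
Lemma F21 : (be + de) * be^-1 * (be + al) = be + al + de + ga - q^-1.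
Proof. cert ((be * be^-1 - 1) * be + (be * be^-1 - 1) * al + de * (be^-1 * be - 1) + q^-1 * (p * be + q * de - 0) * be^-1 * al - (q^-1 * q - 1) * de * be^-1 * al - q^-1 * p * (be * be^-1 - 1) * al - q^-1 * (p * al + q * ga - 1) + (q^-1 * q - 1) * ga).
by rewrite (eq_sub0 h1) (eq_sub0 h2) (eq_sub0 (mulrV Ube)) (eq_sub0 (mulVr Ube)) (eq_sub0 (mulVr Uq)); clean. Qed.
Lemma F22 : (de + be) * de^-1 * (de + ga) = de + ga + be + al - p^-1.
Proof. cert ((de * de^-1 - 1) * de + (de * de^-1 - 1) * ga + be * (de^-1 * de - 1) + p^-1 * (p * be + q * de - 0) * de^-1 * ga - (p^-1 * p - 1) * be * de^-1 * ga - p^-1 * q * (de * de^-1 - 1) * ga - p^-1 * (p * al + q * ga - 1) + (p^-1 * p - 1) * al).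
by rewrite (eq_sub0 h1) (eq_sub0 h2) (eq_sub0 (mulrV Ude)) (eq_sub0 (mulVr Ude)) (eq_sub0 (mulVr Up)); clean. Qed.
Section PE.
Variable sg : R.
Hypothesis hsg : (1 + (al + be + ga + de)) * sg = 1.
Lemma PE11 : (-(al + ga)) * al^-1 * (-(al + be)) * sg = 1 - (1 + s^-1) * sg.
Proof. cert (((al + ga) * al^-1 * (al + be) - (al + be + ga + de - s^-1)) * sg + ((1 + (al + be + ga + de)) * sg - 1)).
by rewrite (eq_sub0 F11) (eq_sub0 hsg); clean. Qed.
Lemma PE12 : (-(al + ga)) * ga^-1 * (-(ga + de)) * sg = 1 - (1 + r^-1) * sg.
Proof. cert (((ga + al) * ga^-1 * (ga + de) - (ga + de + al + be - r^-1)) * sg + ((1 + (al + be + ga + de)) * sg - 1)).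
by rewrite (eq_sub0 F12) (eq_sub0 hsg); clean. Qed.
Lemma PE21 : (-(be + de)) * be^-1 * (-(al + be)) * sg = 1 - (1 + q^-1) * sg.
Proof. cert (((be + de) * be^-1 * (be + al) - (be + al + de + ga - q^-1)) * sg + ((1 + (al + be + ga + de)) * sg - 1)).
by rewrite (eq_sub0 F21) (eq_sub0 hsg); clean. Qed.
Lemma PE22 : (-(be + de)) * de^-1 * (-(ga + de)) * sg = 1 - (1 + p^-1) * sg.
Proof. cert (((de + be) * de^-1 * (de + ga) - (de + ga + be + al - p^-1)) * sg + ((1 + (al + be + ga + de)) * sg - 1)).
by rewrite (eq_sub0 F22) (eq_sub0 hsg); clean. Qed.
Lemma pack_PE : [/\ ((-(al + ga)) * al^-1 * (-(al + be)) * sg = 1 - (1 + s^-1) * sg), ((-(al + ga)) * ga^-1 * (-(ga + de)) * sg = 1 - (1 + r^-1) * sg), ((-(be + de)) * be^-1 * (-(al + be)) * sg = 1 - (1 + q^-1) * sg) & ((-(be + de)) * de^-1 * (-(ga + de)) * sg = 1 - (1 + p^-1) * sg)].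
Proof using All. by split; [exact: PE11|exact: PE12|exact: PE21|exact: PE22]. Qed.
End PE.
Lemma pack_U : [/\ [/\ al \is a GRing.unit, be \is a GRing.unit, ga \is a GRing.unit & de \is a GRing.unit] & [/\ al + be \is a GRing.unit, al + ga \is a GRing.unit, be + de \is a GRing.unit & ga + de \is a GRing.unit]].
Proof using All. by split; split; [exact: Ual|exact: Ube|exact: Uga|exact: Ude|exact: Ualbe|exact: Ualga|exact: Ubede|exact: Ugade]. Qed.
Lemma pack_QQ : [/\ [/\ (s^-1 * (-(r * al * q)) + q^-1 * (p * al * q) = 1), (s^-1 * (r * al * p) + q^-1 * (p * be * r) = 0), (r^-1 * (-(r * al * q)) + p^-1 * (p * al * q) = 0) & (r^-1 * (r * al * p) + p^-1 * (p * be * r) = 1)] & [/\ ((-(r * al * q)) * s^-1 + (r * al * p) * r^-1 = 1), ((-(r * al * q)) * q^-1 + (r * al * p) * p^-1 = 0), ((p * al * q) * s^-1 + (p * be * r) * r^-1 = 0) & ((p * al * q) * q^-1 + (p * be * r) * p^-1 = 1)]].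
Proof using All. by split; split; [exact: QQ1|exact: QQ2|exact: QQ3|exact: QQ4|exact: QQ5|exact: QQ6|exact: QQ7|exact: QQ8]. Qed.
End Two.
Definition o1 : 'I_3 := @Ordinal 3 1 isT.
Definition o2 : 'I_3 := @Ordinal 3 2 isT.
Lemma ord3P (i : 'I_3) : i = 0 \/ i = o1 \/ i = o2.
Proof.
case: i => [[|[|[|n]]] Hi].
- by left; apply: val_inj.
- by right; left; apply: val_inj.
- by right; right; apply: val_inj.
- by [].
Qed.
Lemma mul3E (M N : 'M[R]_3) i j :
  (M *m N) i j = M i 0 * N 0 j + M i o1 * N o1 j + M i o2 * N o2 j.
Proof.
rewrite mxE !big_ord_recl big_ord0 addr0 addrA.
have -> : lift ord0 (ord0 : 'I_2) = o1 by apply: val_inj.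
by have -> : lift ord0 (lift ord0 (ord0 : 'I_1)) = o2 by apply: val_inj.
Qed.
Lemma one3E (i j : 'I_3) : (1%:M : 'M[R]_3) i j = (i == j)%:R.
Proof. by rewrite mxE. Qed.
Definition hat3 (x11 x12 x21 x22 : R) : 'M[R]_3 :=
  \matrix_(i, j) (match (i : nat), (j : nat) with
     | 1%N, 1%N => x11 | 1%N, 2%N => x12 | 2%N, 1%N => x21 | 2%N, 2%N => x22 | _, _ => 1 end).
Lemma hat3_mulE x11 x12 x21 x22 (Y : 'M[R]_3) j :
  [/\ (hat3 x11 x12 x21 x22 *m Y) 0 j = Y 0 j + Y o1 j + Y o2 j,
      (hat3 x11 x12 x21 x22 *m Y) o1 j = Y 0 j + x11 * Y o1 j + x12 * Y o2 j &
      (hat3 x11 x12 x21 x22 *m Y) o2 j = Y 0 j + x21 * Y o1 j + x22 * Y o2 j].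
Proof. by rewrite !mul3E !mxE /= !mul1r. Qed.
Lemma mul_hat3E x11 x12 x21 x22 (Y : 'M[R]_3) i :
  [/\ (Y *m hat3 x11 x12 x21 x22) i 0 = Y i 0 + Y i o1 + Y i o2,
      (Y *m hat3 x11 x12 x21 x22) i o1 = Y i 0 + Y i o1 * x11 + Y i o2 * x21 &
      (Y *m hat3 x11 x12 x21 x22) i o2 = Y i 0 + Y i o1 * x12 + Y i o2 * x22].
Proof. by rewrite !mul3E !mxE /= !mulr1. Qed.

Section Hat.
Variables (x11 x12 x21 x22 : R) (Y : 'M[R]_3).
Hypotheses (XY : hat3 x11 x12 x21 x22 *m Y = 1%:M) (YX : Y *m hat3 x11 x12 x21 x22 = 1%:M).
Let E0 j : Y 0 j + Y o1 j + Y o2 j = (0 == j)%:R.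
Proof. have := congr1 (fun M : 'M[R]_3 => M 0 j) XY; by case: (hat3_mulE x11 x12 x21 x22 Y j) => -> _ _; rewrite one3E. Qed.
Let E1 j : Y 0 j + x11 * Y o1 j + x12 * Y o2 j = (o1 == j)%:R.
Proof. have := congr1 (fun M : 'M[R]_3 => M o1 j) XY; by case: (hat3_mulE x11 x12 x21 x22 Y j) => _ -> _; rewrite one3E. Qed.
Let E2 j : Y 0 j + x21 * Y o1 j + x22 * Y o2 j = (o2 == j)%:R.
Proof. have := congr1 (fun M : 'M[R]_3 => M o2 j) XY; by case: (hat3_mulE x11 x12 x21 x22 Y j) => _ _ ->; rewrite one3E. Qed.
Let F0 i : Y i 0 + Y i o1 + Y i o2 = (i == 0)%:R.
Proof. have := congr1 (fun M : 'M[R]_3 => M i 0) YX; by case: (mul_hat3E x11 x12 x21 x22 Y i) => -> _ _; rewrite one3E. Qed.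
Let F1 i : Y i 0 + Y i o1 * x11 + Y i o2 * x21 = (i == o1)%:R.
Proof. have := congr1 (fun M : 'M[R]_3 => M i o1) YX; by case: (mul_hat3E x11 x12 x21 x22 Y i) => _ -> _; rewrite one3E. Qed.
Let F2 i : Y i 0 + Y i o1 * x12 + Y i o2 * x22 = (i == o2)%:R.
Proof. have := congr1 (fun M : 'M[R]_3 => M i o2) YX; by case: (mul_hat3E x11 x12 x21 x22 Y i) => _ _ ->; rewrite one3E. Qed.

Let e00 : Y 0 0 + Y o1 0 + Y o2 0 = 1. Proof. exact: (E0 0). Qed.
Let e01 : Y 0 o1 + Y o1 o1 + Y o2 o1 = 0. Proof. exact: (E0 o1). Qed.
Let e02 : Y 0 o2 + Y o1 o2 + Y o2 o2 = 0. Proof. exact: (E0 o2). Qed.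
Let e10 : Y 0 0 + x11 * Y o1 0 + x12 * Y o2 0 = 0. Proof. exact: (E1 0). Qed.
Let e11 : Y 0 o1 + x11 * Y o1 o1 + x12 * Y o2 o1 = 1. Proof. exact: (E1 o1). Qed.
Let e12 : Y 0 o2 + x11 * Y o1 o2 + x12 * Y o2 o2 = 0. Proof. exact: (E1 o2). Qed.
Let e20 : Y 0 0 + x21 * Y o1 0 + x22 * Y o2 0 = 0. Proof. exact: (E2 0). Qed.
Let e21 : Y 0 o1 + x21 * Y o1 o1 + x22 * Y o2 o1 = 0. Proof. exact: (E2 o1). Qed.
Let e22 : Y 0 o2 + x21 * Y o1 o2 + x22 * Y o2 o2 = 1. Proof. exact: (E2 o2). Qed.
Let f00 : Y 0 0 + Y 0 o1 + Y 0 o2 = 1. Proof. exact: (F0 0). Qed.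
Let f10 : Y o1 0 + Y o1 o1 + Y o1 o2 = 0. Proof. exact: (F0 o1). Qed.
Let f20 : Y o2 0 + Y o2 o1 + Y o2 o2 = 0. Proof. exact: (F0 o2). Qed.
Let f01 : Y 0 0 + Y 0 o1 * x11 + Y 0 o2 * x21 = 0. Proof. exact: (F1 0). Qed.
Let f11 : Y o1 0 + Y o1 o1 * x11 + Y o1 o2 * x21 = 1. Proof. exact: (F1 o1). Qed.
Let f21 : Y o2 0 + Y o2 o1 * x11 + Y o2 o2 * x21 = 0. Proof. exact: (F1 o2). Qed.
Let f02 : Y 0 0 + Y 0 o1 * x12 + Y 0 o2 * x22 = 0. Proof. exact: (F2 0). Qed.
Let f12 : Y o1 0 + Y o1 o1 * x12 + Y o1 o2 * x22 = 0. Proof. exact: (F2 o1). Qed.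
Let f22 : Y o2 0 + Y o2 o1 * x12 + Y o2 o2 * x22 = 1. Proof. exact: (F2 o2). Qed.

Lemma hat_h1 : (x11 - 1) * Y o1 o1 + (x12 - 1) * Y o2 o1 = 1.
Proof. cert ((Y 0 o1 + x11 * Y o1 o1 + x12 * Y o2 o1 - 1) - (Y 0 o1 + Y o1 o1 + Y o2 o1 - 0)).
by rewrite (eq_sub0 e11) (eq_sub0 e01); clean. Qed.
Lemma hat_h2 : (x11 - 1) * Y o1 o2 + (x12 - 1) * Y o2 o2 = 0.
Proof. cert ((Y 0 o2 + x11 * Y o1 o2 + x12 * Y o2 o2 - 0) - (Y 0 o2 + Y o1 o2 + Y o2 o2 - 0)).
by rewrite (eq_sub0 e12) (eq_sub0 e02); clean. Qed.
Lemma hat_h3 : (x21 - 1) * Y o1 o1 + (x22 - 1) * Y o2 o1 = 0.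
Proof. cert ((Y 0 o1 + x21 * Y o1 o1 + x22 * Y o2 o1 - 0) - (Y 0 o1 + Y o1 o1 + Y o2 o1 - 0)).
by rewrite (eq_sub0 e21) (eq_sub0 e01); clean. Qed.
Lemma hat_h4 : (x21 - 1) * Y o1 o2 + (x22 - 1) * Y o2 o2 = 1.
Proof. cert ((Y 0 o2 + x21 * Y o1 o2 + x22 * Y o2 o2 - 1) - (Y 0 o2 + Y o1 o2 + Y o2 o2 - 0)).
by rewrite (eq_sub0 e22) (eq_sub0 e02); clean. Qed.
Lemma hat_h5 : Y o1 o1 * (x11 - 1) + Y o1 o2 * (x21 - 1) = 1.
Proof. cert ((Y o1 0 + Y o1 o1 * x11 + Y o1 o2 * x21 - 1) - (Y o1 0 + Y o1 o1 + Y o1 o2 - 0)).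
by rewrite (eq_sub0 f11) (eq_sub0 f10); clean. Qed.
Lemma hat_h6 : Y o1 o1 * (x12 - 1) + Y o1 o2 * (x22 - 1) = 0.
Proof. cert ((Y o1 0 + Y o1 o1 * x12 + Y o1 o2 * x22 - 0) - (Y o1 0 + Y o1 o1 + Y o1 o2 - 0)).
by rewrite (eq_sub0 f12) (eq_sub0 f10); clean. Qed.
Lemma hat_h7 : Y o2 o1 * (x11 - 1) + Y o2 o2 * (x21 - 1) = 0.
Proof. cert ((Y o2 0 + Y o2 o1 * x11 + Y o2 o2 * x21 - 0) - (Y o2 0 + Y o2 o1 + Y o2 o2 - 0)).
by rewrite (eq_sub0 f21) (eq_sub0 f20); clean. Qed.
Lemma hat_h8 : Y o2 o1 * (x12 - 1) + Y o2 o2 * (x22 - 1) = 1.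
Proof. cert ((Y o2 0 + Y o2 o1 * x12 + Y o2 o2 * x22 - 1) - (Y o2 0 + Y o2 o1 + Y o2 o2 - 0)).
by rewrite (eq_sub0 f22) (eq_sub0 f20); clean. Qed.
Lemma hat_Y01 : Y 0 o1 = - (Y o1 o1 + Y o2 o1).
Proof. cert ((Y 0 o1 + Y o1 o1 + Y o2 o1 - 0)).
by rewrite (eq_sub0 e01); clean. Qed.
Lemma hat_Y02 : Y 0 o2 = - (Y o1 o2 + Y o2 o2).
Proof. cert ((Y 0 o2 + Y o1 o2 + Y o2 o2 - 0)).
by rewrite (eq_sub0 e02); clean. Qed.
Lemma hat_Y10 : Y o1 0 = - (Y o1 o1 + Y o1 o2).
Proof. cert ((Y o1 0 + Y o1 o1 + Y o1 o2 - 0)).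
by rewrite (eq_sub0 f10); clean. Qed.
Lemma hat_Y20 : Y o2 0 = - (Y o2 o1 + Y o2 o2).
Proof. cert ((Y o2 0 + Y o2 o1 + Y o2 o2 - 0)).
by rewrite (eq_sub0 f20); clean. Qed.
Lemma hat_Y00 : Y 0 0 = 1 + (Y o1 o1 + Y o1 o2 + Y o2 o1 + Y o2 o2).
Proof. cert ((Y 0 0 + Y o1 0 + Y o2 0 - 1) - (Y o1 0 + Y o1 o1 + Y o1 o2 - 0) - (Y o2 0 + Y o2 o1 + Y o2 o2 - 0)).
by rewrite (eq_sub0 e00) (eq_sub0 f10) (eq_sub0 f20); clean. Qed.

Section T.
Variables t00 t01 t10 t11 : R.
Hypotheses (l1 : x11 * t00 + x12 * t10 = 1) (l2 : x11 * t01 + x12 * t11 = 0)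
  (l3 : x21 * t00 + x22 * t10 = 0) (l4 : x21 * t01 + x22 * t11 = 1)
  (l5 : t00 * x11 + t01 * x21 = 1) (l6 : t00 * x12 + t01 * x22 = 0)
  (l7 : t10 * x11 + t11 * x21 = 0) (l8 : t10 * x12 + t11 * x22 = 1).
Lemma hat_Y00a : Y 0 0 * (1 - (t00 + t01 + t10 + t11)) = 1.
Proof. cert ((Y 0 0 + Y 0 o1 + Y 0 o2 - 1) + (-(Y 0 0 + Y 0 o1 * x11 + Y 0 o2 * x21 - 0) * t00 - (Y 0 0 + Y 0 o1 * x12 + Y 0 o2 * x22 - 0) * t10 + Y 0 o1 * (x11 * t00 + x12 * t10 - 1) + Y 0 o2 * (x21 * t00 + x22 * t10 - 0)) + (-(Y 0 0 + Y 0 o1 * x11 + Y 0 o2 * x21 - 0) * t01 - (Y 0 0 + Y 0 o1 * x12 + Y 0 o2 * x22 - 0) * t11 + Y 0 o1 * (x11 * t01 + x12 * t11 - 0) + Y 0 o2 * (x21 * t01 + x22 * t11 - 1))).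
by rewrite (eq_sub0 f00) (eq_sub0 f01) (eq_sub0 f02) (eq_sub0 l1) (eq_sub0 l2) (eq_sub0 l3) (eq_sub0 l4); clean. Qed.
Lemma hat_Y00b : (1 - (t00 + t01 + t10 + t11)) * Y 0 0 = 1.
Proof. cert ((Y 0 0 + Y o1 0 + Y o2 0 - 1) + (-t00 * (Y 0 0 + x11 * Y o1 0 + x12 * Y o2 0 - 0) - t01 * (Y 0 0 + x21 * Y o1 0 + x22 * Y o2 0 - 0) + (t00 * x11 + t01 * x21 - 1) * Y o1 0 + (t00 * x12 + t01 * x22 - 0) * Y o2 0) + (-t10 * (Y 0 0 + x11 * Y o1 0 + x12 * Y o2 0 - 0) - t11 * (Y 0 0 + x21 * Y o1 0 + x22 * Y o2 0 - 0) + (t10 * x11 + t11 * x21 - 0) * Y o1 0 + (t10 * x12 + t11 * x22 - 1) * Y o2 0)).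
by rewrite (eq_sub0 e00) (eq_sub0 e10) (eq_sub0 e20) (eq_sub0 l5) (eq_sub0 l6) (eq_sub0 l7) (eq_sub0 l8); clean. Qed.
Lemma pack_hatT : Y 0 0 * (1 - (t00 + t01 + t10 + t11)) = 1 /\ (1 - (t00 + t01 + t10 + t11)) * Y 0 0 = 1.
Proof using All. by split; [apply: hat_Y00a|apply: hat_Y00b]. Qed.
End T.
Lemma pack_hat : [/\ [/\ ((x11 - 1) * Y o1 o1 + (x12 - 1) * Y o2 o1 = 1), ((x11 - 1) * Y o1 o2 + (x12 - 1) * Y o2 o2 = 0), ((x21 - 1) * Y o1 o1 + (x22 - 1) * Y o2 o1 = 0) & ((x21 - 1) * Y o1 o2 + (x22 - 1) * Y o2 o2 = 1)], [/\ (Y o1 o1 * (x11 - 1) + Y o1 o2 * (x21 - 1) = 1), (Y o1 o1 * (x12 - 1) + Y o1 o2 * (x22 - 1) = 0), (Y o2 o1 * (x11 - 1) + Y o2 o2 * (x21 - 1) = 0) & (Y o2 o1 * (x12 - 1) + Y o2 o2 * (x22 - 1) = 1)] & [/\ (Y 0 o1 = - (Y o1 o1 + Y o2 o1)), (Y 0 o2 = - (Y o1 o2 + Y o2 o2)), (Y o1 0 = - (Y o1 o1 + Y o1 o2)), (Y o2 0 = - (Y o2 o1 + Y o2 o2)) & (Y 0 0 = 1 + (Y o1 o1 + Y o1 o2 + Y o2 o1 + Y o2 o2))]].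
Proof using All. split; split; by [apply: hat_h1|apply: hat_h2|apply: hat_h3|apply: hat_h4|apply: hat_h5|apply: hat_h6|apply: hat_h7|apply: hat_h8|apply: hat_Y01|apply: hat_Y02|apply: hat_Y10|apply: hat_Y20|apply: hat_Y00]. Qed.
End Hat.


Definition hatinv (al be ga de : R) : 'M[R]_3 :=
  \matrix_(i, j) (match (i : nat), (j : nat) with
     | 0%N, 0%N => 1 + (al + be + ga + de) | 0%N, 1%N => - (al + ga) | 0%N, 2%N => - (be + de)
     | 1%N, 0%N => - (al + be) | 2%N, 0%N => - (ga + de)
     | 1%N, 1%N => al | 1%N, 2%N => be | 2%N, 1%N => ga | _, _ => de end).
Section HatInv.
Variables x11 x12 x21 x22 al be ga de : R.
Hypotheses (h1 : (x11 - 1) * al + (x12 - 1) * ga = 1) (h2 : (x11 - 1) * be + (x12 - 1) * de = 0)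
 (h3 : (x21 - 1) * al + (x22 - 1) * ga = 0) (h4 : (x21 - 1) * be + (x22 - 1) * de = 1)
 (h5 : al * (x11 - 1) + be * (x21 - 1) = 1) (h6 : al * (x12 - 1) + be * (x22 - 1) = 0)
 (h7 : ga * (x11 - 1) + de * (x21 - 1) = 0) (h8 : ga * (x12 - 1) + de * (x22 - 1) = 1).
Lemma hatinv_l : hat3 x11 x12 x21 x22 *m hatinv al be ga de = 1%:M.
Proof.
apply/matrixP => i j; rewrite mul3E one3E !mxE /=.
case: (ord3P i) => [->|[->|->]]; case: (ord3P j) => [->|[->|->]] /=.
  - cert (0 : R).
    by  clean.
  - cert (0 : R).
    by  clean.
  - cert (0 : R).
    by  clean.
  - cert (- ((x11 - 1) * al + (x12 - 1) * ga - 1) + - ((x11 - 1) * be + (x12 - 1) * de - 0)).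
    by rewrite (eq_sub0 h1) (eq_sub0 h2); clean.
  - cert (((x11 - 1) * al + (x12 - 1) * ga - 1)).
    by rewrite (eq_sub0 h1); clean.
  - cert (((x11 - 1) * be + (x12 - 1) * de - 0)).
    by rewrite (eq_sub0 h2); clean.
  - cert (- ((x21 - 1) * al + (x22 - 1) * ga - 0) + - ((x21 - 1) * be + (x22 - 1) * de - 1)).
    by rewrite (eq_sub0 h3) (eq_sub0 h4); clean.
  - cert (((x21 - 1) * al + (x22 - 1) * ga - 0)).
    by rewrite (eq_sub0 h3); clean.
  - cert (((x21 - 1) * be + (x22 - 1) * de - 1)).
    by rewrite (eq_sub0 h4); clean.

Qed.
Lemma hatinv_r : hatinv al be ga de *m hat3 x11 x12 x21 x22 = 1%:M.
Proof.
apply/matrixP => i j; rewrite mul3E one3E !mxE /=.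
case: (ord3P i) => [->|[->|->]]; case: (ord3P j) => [->|[->|->]] /=.
  - cert (0 : R).
    by  clean.
  - cert (- (al * (x11 - 1) + be * (x21 - 1) - 1) + - (ga * (x11 - 1) + de * (x21 - 1) - 0)).
    by rewrite (eq_sub0 h5) (eq_sub0 h7); clean.
  - cert (- (al * (x12 - 1) + be * (x22 - 1) - 0) + - (ga * (x12 - 1) + de * (x22 - 1) - 1)).
    by rewrite (eq_sub0 h6) (eq_sub0 h8); clean.
  - cert (0 : R).
    by  clean.
  - cert ((al * (x11 - 1) + be * (x21 - 1) - 1)).
    by rewrite (eq_sub0 h5); clean.
  - cert ((al * (x12 - 1) + be * (x22 - 1) - 0)).
    by rewrite (eq_sub0 h6); clean.
  - cert (0 : R).
    by  clean.
  - cert ((ga * (x11 - 1) + de * (x21 - 1) - 0)).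
    by rewrite (eq_sub0 h7); clean.
  - cert ((ga * (x12 - 1) + de * (x22 - 1) - 1)).
    by rewrite (eq_sub0 h8); clean.

Qed.
Lemma pack_hatinv : hat3 x11 x12 x21 x22 *m hatinv al be ga de = 1%:M /\ hatinv al be ga de *m hat3 x11 x12 x21 x22 = 1%:M.
Proof using All. by split; [apply: hatinv_l|apply: hatinv_r]. Qed.
End HatInv.


Lemma J1_some (M N : 'M[R]_3) : M *m N = 1%:M -> N *m M = 1%:M -> J1 M = Some N.
Proof.
move=> h1 h2; rewrite /J1.
case: excluded_middle_informative => [h|h]; last by case: h; exists N.
congr Some; case: (constructive_indefinite_description _ h) => N' [h3 h4] /=.
by rewrite -[N']mulmx1 -h1 mulmxA h4 mul1mx.
Qed.
Lemma J1_spec (M N : 'M[R]_3) : J1 M = Some N -> M *m N = 1%:M /\ N *m M = 1%:M.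
Proof.
rewrite /J1; case: excluded_middle_informative => [h|//].
by case: (constructive_indefinite_description _ h) => N' hN [<-].
Qed.
Lemma J1_inv (M : 'M[R]_3) : mx_invertible M -> exists N, J1 M = Some N /\ M *m N = 1%:M /\ N *m M = 1%:M.
Proof. case=> N [h1 h2]; exists N; split=> //; exact: J1_some. Qed.
Lemma allunitP (M : 'M[R]_3) : reflect (forall i j, M i j \is a GRing.unit) (allunit M).
Proof.
apply: (iffP forallP) => [h i j|h i]; first by have /forallP := h i; apply.
by apply/forallP => j; apply: h.
Qed.
Lemma J2_some (M : 'M[R]_3) : allunit M -> J2 M = Some (\matrix_(j, k) (M k j)^-1).
Proof. by rewrite /J2 => ->. Qed.
Lemma hatMP (M : 'M[R]_3) : reflect (forall i, M 0 i = 1 /\ M i 0 = 1) (hatM M).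
Proof.
apply: (iffP forallP) => [h i|h i]; first by have /andP[/eqP ? /eqP ?] := h i.
by case: (h i) => -> ->; rewrite !eqxx.
Qed.

Section CoreT.
Variables a b c d t00 t01 t10 t11 : R.
Hypotheses (Ua : a \is a GRing.unit) (Ub : b \is a GRing.unit) (Uc : c \is a GRing.unit) (Ud : d \is a GRing.unit).
Hypotheses (LT1 : a * t00 + b * t10 = 1) (LT2 : a * t01 + b * t11 = 0) (LT3 : c * t00 + d * t10 = 0) (LT4 : c * t01 + d * t11 = 1)
  (TL1 : t00 * a + t01 * c = 1) (TL2 : t00 * b + t01 * d = 0) (TL3 : t10 * a + t11 * c = 0) (TL4 : t10 * b + t11 * d = 1).
Lemma NI1 : a^-1 * (a * t01 * c) + c^-1 * (-(d * t10 * a)) = 1.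
Proof. cert ((a^-1 * a - 1) * t01 * c - c^-1 * (c * t00 + d * t10 - 0) * a + (c^-1 * c - 1) * t00 * a + (t00 * a + t01 * c - 1)).
by rewrite (eq_sub0 LT3) (eq_sub0 TL1) (eq_sub0 (mulVr Ua)) (eq_sub0 (mulVr Uc)); clean. Qed.
Lemma NI2 : a^-1 * (-(a * t01 * d)) + c^-1 * (d * t10 * b) = 0.
Proof. cert (-(a^-1 * a - 1) * t01 * d + c^-1 * (c * t00 + d * t10 - 0) * b - (c^-1 * c - 1) * t00 * b - (t00 * b + t01 * d - 0)).
by rewrite (eq_sub0 LT3) (eq_sub0 TL2) (eq_sub0 (mulVr Ua)) (eq_sub0 (mulVr Uc)); clean. Qed.
Lemma NI3 : b^-1 * (a * t01 * c) + d^-1 * (-(d * t10 * a)) = 0.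
Proof. cert (b^-1 * (a * t01 + b * t11 - 0) * c - (b^-1 * b - 1) * t11 * c - (d^-1 * d - 1) * t10 * a - (t10 * a + t11 * c - 0)).
by rewrite (eq_sub0 LT2) (eq_sub0 TL3) (eq_sub0 (mulVr Ub)) (eq_sub0 (mulVr Ud)); clean. Qed.
Lemma NI4 : b^-1 * (-(a * t01 * d)) + d^-1 * (d * t10 * b) = 1.
Proof. cert (-b^-1 * (a * t01 + b * t11 - 0) * d + (b^-1 * b - 1) * t11 * d + (d^-1 * d - 1) * t10 * b + (t10 * b + t11 * d - 1)).
by rewrite (eq_sub0 LT2) (eq_sub0 TL4) (eq_sub0 (mulVr Ub)) (eq_sub0 (mulVr Ud)); clean. Qed.
Lemma NI5 : (a * t01 * c) * a^-1 + (-(a * t01 * d)) * b^-1 = 1.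
Proof. cert (a * (t00 * a + t01 * c - 1) * a^-1 - a * t00 * (a * a^-1 - 1) + (a * a^-1 - 1) - a * (t00 * b + t01 * d - 0) * b^-1 + a * t00 * (b * b^-1 - 1)).
by rewrite (eq_sub0 TL1) (eq_sub0 TL2) (eq_sub0 (mulrV Ua)) (eq_sub0 (mulrV Ub)); clean. Qed.
Lemma NI6 : (a * t01 * c) * c^-1 + (-(a * t01 * d)) * d^-1 = 0.
Proof. cert (a * t01 * (c * c^-1 - 1) - a * t01 * (d * d^-1 - 1)).
by rewrite (eq_sub0 (mulrV Uc)) (eq_sub0 (mulrV Ud)); clean. Qed.
Lemma NI7 : (-(d * t10 * a)) * a^-1 + (d * t10 * b) * b^-1 = 0.
Proof. cert (-d * t10 * (a * a^-1 - 1) + d * t10 * (b * b^-1 - 1)).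
by rewrite (eq_sub0 (mulrV Ua)) (eq_sub0 (mulrV Ub)); clean. Qed.
Lemma NI8 : (-(d * t10 * a)) * c^-1 + (d * t10 * b) * d^-1 = 1.
Proof. cert (-d * (t10 * a + t11 * c - 0) * c^-1 + d * t11 * (c * c^-1 - 1) + d * (t10 * b + t11 * d - 1) * d^-1 - d * t11 * (d * d^-1 - 1) + (d * d^-1 - 1)).
by rewrite (eq_sub0 TL3) (eq_sub0 TL4) (eq_sub0 (mulrV Uc)) (eq_sub0 (mulrV Ud)); clean. Qed.
Lemma S1 : 1 - (t00 + t01 + t10 + t11) = -(a^-1 - 1) - (a^-1 - b^-1) * (a * t01 * c) * (c^-1 - a^-1).
Proof. cert ((a^-1 * a - 1) * t01 * c * c^-1 + t01 * (c * c^-1 - 1) - (a^-1 * a - 1) * t01 * c * a^-1 - (t00 * a + t01 * c - 1) * a^-1 + t00 * (a * a^-1 - 1) - b^-1 * a * t01 * (c * c^-1 - 1) - b^-1 * (a * t01 + b * t11 - 0) + (b^-1 * b - 1) * t11 + b^-1 * (a * t01 + b * t11 - 0) * c * a^-1 - (b^-1 * b - 1) * t11 * c * a^-1 - (t10 * a + t11 * c - 0) * a^-1 + t10 * (a * a^-1 - 1)).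
by rewrite (eq_sub0 LT2) (eq_sub0 TL1) (eq_sub0 TL3) (eq_sub0 (mulVr Ua)) (eq_sub0 (mulrV Ua)) (eq_sub0 (mulrV Uc)) (eq_sub0 (mulVr Ub)); clean. Qed.
Lemma pack_T : [/\ [/\ (a^-1 * (a * t01 * c) + c^-1 * (-(d * t10 * a)) = 1), (a^-1 * (-(a * t01 * d)) + c^-1 * (d * t10 * b) = 0), (b^-1 * (a * t01 * c) + d^-1 * (-(d * t10 * a)) = 0) & (b^-1 * (-(a * t01 * d)) + d^-1 * (d * t10 * b) = 1)], [/\ ((a * t01 * c) * a^-1 + (-(a * t01 * d)) * b^-1 = 1), ((a * t01 * c) * c^-1 + (-(a * t01 * d)) * d^-1 = 0), ((-(d * t10 * a)) * a^-1 + (d * t10 * b) * b^-1 = 0) & ((-(d * t10 * a)) * c^-1 + (d * t10 * b) * d^-1 = 1)] & (1 - (t00 + t01 + t10 + t11) = -(a^-1 - 1) - (a^-1 - b^-1) * (a * t01 * c) * (c^-1 - a^-1))].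
Proof using All. by split; [split|split|]; [apply: NI1|apply: NI2|apply: NI3|apply: NI4|apply: NI5|apply: NI6|apply: NI7|apply: NI8|apply: S1]. Qed.
End CoreT.
Section Sinv.
Variable x : R.
Hypotheses (Ux : x \is a GRing.unit) (Ux1 : x - 1 \is a GRing.unit).
Lemma SV1 : (x^-1 - 1) * (-(1 + (x - 1)^-1)) = 1.
Proof. cert (x^-1 * ((x - 1) * (x - 1)^-1 - 1) - (x^-1 * x - 1) * (x - 1)^-1).
by rewrite (eq_sub0 (mulrV Ux1)) (eq_sub0 (mulVr Ux)); clean. Qed.
Lemma SV2 : (-(1 + (x - 1)^-1)) * (x^-1 - 1) = 1.
Proof. cert (((x - 1)^-1 * (x - 1) - 1) * x^-1 - (x - 1)^-1 * (x * x^-1 - 1)).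
by rewrite (eq_sub0 (mulVr Ux1)) (eq_sub0 (mulrV Ux)); clean. Qed.
Lemma Sinv : (x^-1 - 1)^-1 = -(1 + (x - 1)^-1).
Proof. by case: (two_inv SV1 SV2). Qed.
Lemma USinv : x^-1 - 1 \is a GRing.unit.
Proof. by case: (two_inv SV1 SV2). Qed.
End Sinv.

Section CoreK.
Variables a b c d t00 t01 t10 t11 al be ga de tau : R.
Hypothesis hK1 : (a^-1 - 1) * al + (c^-1 - 1) * ga = 1.
Hypothesis hK2 : (a^-1 - 1) * be + (c^-1 - 1) * de = 0.
Hypothesis hK3 : (b^-1 - 1) * al + (d^-1 - 1) * ga = 0.
Hypothesis hK4 : (b^-1 - 1) * be + (d^-1 - 1) * de = 1.
Hypothesis hK5 : al * (a^-1 - 1) + be * (b^-1 - 1) = 1.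
Hypothesis hK6 : al * (c^-1 - 1) + be * (d^-1 - 1) = 0.
Hypothesis hK7 : ga * (a^-1 - 1) + de * (b^-1 - 1) = 0.
Hypothesis hK8 : ga * (c^-1 - 1) + de * (d^-1 - 1) = 1.
Hypothesis htau : (1 + (al + be + ga + de)) * tau = 1.
Hypothesis l5 : (a * t01 * c) * a^-1 + (-(a * t01 * d)) * b^-1 = 1.
Hypothesis l6 : (a * t01 * c) * c^-1 + (-(a * t01 * d)) * d^-1 = 0.
Hypothesis hS1 : 1 - (t00 + t01 + t10 + t11) = -(a^-1 - 1) - (a^-1 - b^-1) * (a * t01 * c) * (c^-1 - a^-1).
Hypothesis Usg : 1 - (t00 + t01 + t10 + t11) \is a GRing.unit.
Lemma S2a : a^-1 * (al - (al + be) * tau * (al + ga)) + c^-1 * (ga - (ga + de) * tau * (al + ga)) = 1.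
Proof. cert (((a^-1 - 1) * al + (c^-1 - 1) * ga - 1) - ((a^-1 - 1) * al + (c^-1 - 1) * ga - 1) * tau * (al + ga) - ((a^-1 - 1) * be + (c^-1 - 1) * de - 0) * tau * (al + ga) - ((1 + (al + be + ga + de)) * tau - 1) * (al + ga)).
by rewrite (eq_sub0 hK1) (eq_sub0 hK2) (eq_sub0 htau); clean. Qed.
Lemma S2b : b^-1 * (al - (al + be) * tau * (al + ga)) + d^-1 * (ga - (ga + de) * tau * (al + ga)) = 0.
Proof. cert (((b^-1 - 1) * al + (d^-1 - 1) * ga - 0) - ((b^-1 - 1) * al + (d^-1 - 1) * ga - 0) * tau * (al + ga) - ((b^-1 - 1) * be + (d^-1 - 1) * de - 1) * tau * (al + ga) - ((1 + (al + be + ga + de)) * tau - 1) * (al + ga)).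
by rewrite (eq_sub0 hK3) (eq_sub0 hK4) (eq_sub0 htau); clean. Qed.
Lemma S2c : (a * t01 * c) = (al - (al + be) * tau * (al + ga)).
Proof. cert (-((a * t01 * c) * (a^-1 * (al - (al + be) * tau * (al + ga)) + c^-1 * (ga - (ga + de) * tau * (al + ga)) - 1) + (-(a * t01 * d)) * (b^-1 * (al - (al + be) * tau * (al + ga)) + d^-1 * (ga - (ga + de) * tau * (al + ga)) - 0) - ((a * t01 * c) * a^-1 + (-(a * t01 * d)) * b^-1 - 1) * (al - (al + be) * tau * (al + ga)) - ((a * t01 * c) * c^-1 + (-(a * t01 * d)) * d^-1 - 0) * (ga - (ga + de) * tau * (al + ga)))).
by rewrite (eq_sub0 S2a) (eq_sub0 S2b) (eq_sub0 l5) (eq_sub0 l6); clean. Qed.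
Lemma XX00 : (1 - (t00 + t01 + t10 + t11)) + ((-((b^-1 - 1) * al * (c^-1 - 1))) + ((b^-1 - 1) * al * (a^-1 - 1)) + ((a^-1 - 1) * al * (c^-1 - 1)) + ((a^-1 - 1) * be * (b^-1 - 1))) = (((a^-1 - 1) - (b^-1 - 1)) * (al + be)) * tau * ((al + ga) * ((c^-1 - 1) - (a^-1 - 1))).
Proof. cert (((1 - (t00 + t01 + t10 + t11)) - (-(a^-1 - 1) - (a^-1 - b^-1) * (a * t01 * c) * (c^-1 - a^-1))) + (a^-1 - 1) * (al * (a^-1 - 1) + be * (b^-1 - 1) - 1) - (a^-1 - b^-1) * ((a * t01 * c) - (al - (al + be) * tau * (al + ga))) * (c^-1 - a^-1)).
by rewrite (eq_sub0 hS1) (eq_sub0 hK5) (eq_sub0 S2c); clean. Qed.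
Lemma X00 : 1 + ((1 - (t00 + t01 + t10 + t11))^-1 * (-((b^-1 - 1) * al * (c^-1 - 1))) + (1 - (t00 + t01 + t10 + t11))^-1 * ((b^-1 - 1) * al * (a^-1 - 1)) + (1 - (t00 + t01 + t10 + t11))^-1 * ((a^-1 - 1) * al * (c^-1 - 1)) + (1 - (t00 + t01 + t10 + t11))^-1 * ((a^-1 - 1) * be * (b^-1 - 1))) = (1 - (t00 + t01 + t10 + t11))^-1 * (((a^-1 - 1) - (b^-1 - 1)) * (al + be)) * tau * ((al + ga) * ((c^-1 - 1) - (a^-1 - 1))).
Proof. cert ((1 - (t00 + t01 + t10 + t11))^-1 * ((1 - (t00 + t01 + t10 + t11)) + ((-((b^-1 - 1) * al * (c^-1 - 1))) + ((b^-1 - 1) * al * (a^-1 - 1)) + ((a^-1 - 1) * al * (c^-1 - 1)) + ((a^-1 - 1) * be * (b^-1 - 1))) - (((a^-1 - 1) - (b^-1 - 1)) * (al + be)) * tau * ((al + ga) * ((c^-1 - 1) - (a^-1 - 1)))) - ((1 - (t00 + t01 + t10 + t11))^-1 * (1 - (t00 + t01 + t10 + t11)) - 1)).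
by rewrite (eq_sub0 XX00) (eq_sub0 (mulVr Usg)); clean. Qed.
Lemma pack_K : (1 + ((1 - (t00 + t01 + t10 + t11))^-1 * (-((b^-1 - 1) * al * (c^-1 - 1))) + (1 - (t00 + t01 + t10 + t11))^-1 * ((b^-1 - 1) * al * (a^-1 - 1)) + (1 - (t00 + t01 + t10 + t11))^-1 * ((a^-1 - 1) * al * (c^-1 - 1)) + (1 - (t00 + t01 + t10 + t11))^-1 * ((a^-1 - 1) * be * (b^-1 - 1))) = (1 - (t00 + t01 + t10 + t11))^-1 * (((a^-1 - 1) - (b^-1 - 1)) * (al + be)) * tau * ((al + ga) * ((c^-1 - 1) - (a^-1 - 1)))).
Proof using All. exact: X00. Qed.
End CoreK.

Lemma inv4 (w x y z : R) : w \is a GRing.unit -> x \is a GRing.unit -> y \is a GRing.unit -> z \is a GRing.unit ->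
  (w * x * y * z)^-1 = z^-1 * y^-1 * x^-1 * w^-1.
Proof.
move=> uw ux uy uz.
by rewrite invrM ?uM3 // invrM ?uM // invrM // !mulrA.
Qed.
Lemma final_conj (C K : 'M[R]_3) (sg : R) (dv ev : 'I_3 -> R) :
  sg \is a GRing.unit -> (forall i, dv i \is a GRing.unit) -> (forall i, ev i \is a GRing.unit) ->
  (forall i j, K i j \is a GRing.unit) ->
  (forall i j, C i j = sg^-1 * dv i * (K j i)^-1 * ev j) ->
  forall j k, C 0 j * (C k j)^-1 * C k 0 * (C 0 0)^-1 =
    ((dv 0)^-1 * sg)^-1 * ((K j 0)^-1 * K j k * (K 0 k)^-1 * K 0 0) * ((dv 0)^-1 * sg).
Proof.
move=> us ud ue uK hC j k; rewrite !hC.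
rewrite !inv4 ?uV // !invrK invrM ?uV // invrK.
cert (sg^-1 * dv 0 * (K j 0)^-1 * (ev j * (ev j)^-1 - 1) * K j k * (dv k)^-1 * sg * sg^-1 * dv k * (K 0 k)^-1 * ev 0 * (ev 0)^-1 * K 0 0 * (dv 0)^-1 * sg
  + sg^-1 * dv 0 * (K j 0)^-1 * K j k * (dv k)^-1 * (sg * sg^-1 - 1) * dv k * (K 0 k)^-1 * ev 0 * (ev 0)^-1 * K 0 0 * (dv 0)^-1 * sg
  + sg^-1 * dv 0 * (K j 0)^-1 * K j k * ((dv k)^-1 * dv k - 1) * (K 0 k)^-1 * ev 0 * (ev 0)^-1 * K 0 0 * (dv 0)^-1 * sg
  + sg^-1 * dv 0 * (K j 0)^-1 * K j k * (K 0 k)^-1 * (ev 0 * (ev 0)^-1 - 1) * K 0 0 * (dv 0)^-1 * sg).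
by rewrite (eq_sub0 (mulrV (ue j))) (eq_sub0 (mulrV us)) (eq_sub0 (mulVr (ud k))) (eq_sub0 (mulrV (ue 0))); clean.
Qed.

Implicit Types x y z w : R.

Lemma inv1 (M : 'M[R]_1) : mx_invertible M -> M 0 0 \is a GRing.unit.
Proof.
case=> N [h1 h2]; apply/unitrP; exists (N 0 0).
have e1 := congr1 (fun X : 'M[R]_1 => X 0 0) h1; have e2 := congr1 (fun X : 'M[R]_1 => X 0 0) h2.
rewrite /= !mxE big_ord1 in e1; rewrite /= !mxE big_ord1 in e2; by rewrite e1 e2.
Qed.

Lemma mul2E (M N : 'M[R]_2) i j : (M *m N) i j = M i 0 * N 0 j + M i 1 * N 1 j.
Proof.
rewrite mxE !big_ord_recl big_ord0 addr0.
by have -> : lift ord0 (ord0 : 'I_1) = 1 by apply: val_inj.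
Qed.

Lemma inv2_rel (M : 'M[R]_2) : mx_invertible M -> exists N : 'M[R]_2,
  [/\ [/\ M 0 0 * N 0 0 + M 0 1 * N 1 0 = 1, M 0 0 * N 0 1 + M 0 1 * N 1 1 = 0,
         M 1 0 * N 0 0 + M 1 1 * N 1 0 = 0 & M 1 0 * N 0 1 + M 1 1 * N 1 1 = 1] &
      [/\ N 0 0 * M 0 0 + N 0 1 * M 1 0 = 1, N 0 0 * M 0 1 + N 0 1 * M 1 1 = 0,
         N 1 0 * M 0 0 + N 1 1 * M 1 0 = 0 & N 1 0 * M 0 1 + N 1 1 * M 1 1 = 1]].
Proof.
case=> N [h1 h2]; exists N.
have e1 i j := congr1 (fun X : 'M[R]_2 => X i j) h1.
have e2 i j := congr1 (fun X : 'M[R]_2 => X i j) h2.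
rewrite /= in e1 e2.
split; split; [move: (e1 0 0)|move: (e1 0 1)|move: (e1 1 0)|move: (e1 1 1)|move: (e2 0 0)|move: (e2 0 1)|move: (e2 1 0)|move: (e2 1 1)];
  by rewrite mul2E mxE.
Qed.

Definition sel2 (x y : 'I_3) : 'I_2 -> 'I_3 := fun i => if val i == 0%N then x else y.
Lemma sel2_homo (x y : 'I_3) : (x < y)%N -> {homo sel2 x y : i j / (i < j)%N}.
Proof.
move=> hxy [[|[|?]] Hi] [[|[|?]] Hj] //=.
Qed.
Lemma sel1_homo (x : 'I_3) : {homo (fun _ : 'I_1 => x) : i j / (i < j)%N}.
Proof. by move=> [[|?] ?] [[|?] ?]. Qed.
Lemma id_homo : {homo (@id 'I_3) : i j / (i < j)%N}.
Proof. by []. Qed.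
Lemma inv2_row (M : 'M[R]_2) : mx_invertible M -> M 0 0 = 1 -> M 0 1 = 1 -> M 1 1 - M 1 0 \is a GRing.unit.
Proof.
move=> /inv2_rel [N [[_ e2 _ e4] [_ _ f3 f4]]] h00 h01.
rewrite h00 h01 in e2 f3 f4; rewrite !mul1r !mulr1 in e2 f3 f4.
apply/unitrP; exists (N 1 1); split.
- cert ((N 1 0 + N 1 1 * M 1 1 - 1) - (N 1 0 + N 1 1 * M 1 0 - 0)).
  by rewrite (eq_sub0 f4) (eq_sub0 f3); clean.
- cert ((M 1 0 * N 0 1 + M 1 1 * N 1 1 - 1) - M 1 0 * (N 0 1 + N 1 1 - 0)).
  by rewrite (eq_sub0 e4) (eq_sub0 e2); clean.
Qed.
Lemma inv2_col (M : 'M[R]_2) : mx_invertible M -> M 0 0 = 1 -> M 1 0 = 1 -> M 1 1 - M 0 1 \is a GRing.unit.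
Proof.
move=> /inv2_rel [N [[_ e2 _ e4] [_ f2 f3 f4]]] h00 h10.
rewrite h00 h10 in e2 e4 f3 f4; rewrite !mul1r !mulr1 in e2 e4 f3 f4.
apply/unitrP; exists (N 1 1); split.
- cert ((N 1 0 * M 0 1 + N 1 1 * M 1 1 - 1) - (N 1 0 + N 1 1 - 0) * M 0 1).
  by rewrite (eq_sub0 f4) (eq_sub0 f3); clean.
- cert ((N 0 1 + M 1 1 * N 1 1 - 1) - (N 0 1 + M 0 1 * N 1 1 - 0)).
  by rewrite (eq_sub0 e4) (eq_sub0 e2); clean.
Qed.

Lemma diff1 x y : (x - 1) - (y - 1) = x - y.
Proof. cert (0 : R); by []. Qed.
Lemma diffinv x y : x \is a GRing.unit -> y \is a GRing.unit ->
  (x^-1 - 1) - (y^-1 - 1) = x^-1 * (y - x) * y^-1.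
Proof.
move=> ux uy; cert (- x^-1 * (y * y^-1 - 1) + (x^-1 * x - 1) * y^-1).
by rewrite (eq_sub0 (mulrV uy)) (eq_sub0 (mulVr ux)); clean.
Qed.
Lemma cancel1 x y : x \is a GRing.unit -> y \is a GRing.unit -> x * y^-1 * y * x^-1 = 1.
Proof. by move=> ux uy; rewrite mulrVK // mulrV. Qed.
Lemma cancel2 x y : x \is a GRing.unit -> y \is a GRing.unit -> x * x^-1 * y * y^-1 = 1.
Proof. by move=> ux uy; rewrite mulrV // mul1r mulrV. Qed.
Lemma invLam x y z w : x \is a GRing.unit -> y \is a GRing.unit -> z \is a GRing.unit -> w \is a GRing.unit ->
  (x * y^-1 * z * w^-1)^-1 = w * z^-1 * y * x^-1.
Proof. by move=> ux uy uz uw; rewrite inv4 ?uV // !invrK. Qed.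
Lemma hatQ_l (Qa Qb u v sg t : R) : sg \is a GRing.unit -> Qa * u + Qb * v = t ->
  ((1 + Qa * sg) - 1) * (sg^-1 * u) + ((1 + Qb * sg) - 1) * (sg^-1 * v) = t.
Proof.
move=> us h; cert (Qa * (sg * sg^-1 - 1) * u + Qb * (sg * sg^-1 - 1) * v + (Qa * u + Qb * v - t)).
by rewrite (eq_sub0 (mulrV us)) (eq_sub0 h); clean.
Qed.
Lemma hatQ_r (Qa Qb u v sg t : R) : sg \is a GRing.unit -> u * Qa + v * Qb = t ->
  (sg^-1 * u) * ((1 + Qa * sg) - 1) + (sg^-1 * v) * ((1 + Qb * sg) - 1) = sg^-1 * t * sg.
Proof.
move=> us h; cert (sg^-1 * (u * Qa + v * Qb - t) * sg).
by rewrite (eq_sub0 h); clean.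
Qed.
Lemma conj01 (sg : R) : sg \is a GRing.unit -> sg^-1 * 1 * sg = 1 /\ sg^-1 * 0 * sg = 0.
Proof. by move=> us; rewrite mulr1 mulVr // mulr0 mul0r. Qed.
Lemma hat3_hatM (x11 x12 x21 x22 : R) : @hatM R (hat3 x11 x12 x21 x22).
Proof. by apply/hatMP => i; rewrite !mxE; case: (ord3P i) => [->|[->|->]]. Qed.
Lemma scal_mul (M : 'M[R]_3) a b i j : (a%:M *m M *m b%:M) i j = a * M i j * b.
Proof.
rewrite mul_scalar_mx mul3E !mxE.
case: (ord3P j) => [->|[->|->]] /=; rewrite ?mulr0n ?mulr1n ?mulr0 ?mul0r ?mulr1 ?add0r ?addr0 ?mulrA //.
Qed.

End NC.


Arguments inv1 {R}.
Arguments inv2_row {R}.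
Arguments inv2_col {R}.
Arguments inv2_rel {R}.
Arguments J1_inv {R}.
Arguments J1_some {R}.
Arguments J2_some {R}.
Arguments allunitP {R}.
Arguments hatMP {R}.
Arguments uM {R}.
Arguments uM3 {R}.
Arguments uN {R}.
Arguments uV {R}.
Arguments diff1 {R}.
Arguments diffinv {R}.
Arguments cancel1 {R}.
Arguments cancel2 {R}.
Arguments invLam {R}.
Arguments hatQ_l {R}.
Arguments hatQ_r {R}.
Arguments hat3_hatM {R}.
Arguments scal_mul {R}.
Arguments final_conj {R}.
Arguments inv4 {R}.
Arguments mul3E {R}.
Arguments two_inv {R x y}.
Arguments conj01 {R}.
Arguments eq_sub0 {R x y}.
Section MainS.
Variable R : unitRingType.
Arguments hat3 {R}.
Arguments hatinv {R}.

Lemma conjK (x y : R) : x \is a GRing.unit -> y = x * (x^-1 * y * x) * x^-1.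
Proof. by move=> ux; rewrite !mulrA mulrV // mul1r mulrK. Qed.

Lemma main (A : 'M[R]_3) : inShat A ->
  exists (x : R) (P2 Pinv : 'M[R]_3),
    x \is a GRing.unit /\
    Phi2 A = Some P2 /\ PhiInv A = Some Pinv /\
    P2 = conjx x Pinv /\ mxsim P2 Pinv.
Proof.
move=> [[Hsub [H0 [HJ2 HHinv]]] /hatMP hA].
pose a := A o1 o1; pose b := A o1 o2; pose c := A o2 o1; pose d := A o2 o2.
have AE : A = hat3 a b c d.
  apply/matrixP => i j; rewrite !mxE.
  case: (ord3P i) => [->|[->|->]]; case: (ord3P j) => [->|[->|->]] //=;
  by [case: (hA 0) => ? ? | case: (hA o1) => ? ? | case: (hA o2) => ? ?].
have UA i j : A i j \is a GRing.unit.
  have := Hsub 1%N (fun _ => i) (fun _ => j) (sel1_homo i) (sel1_homo j).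
  by move/inv1; rewrite mxE.
have Ua : a \is a GRing.unit := UA o1 o1.
have Ub : b \is a GRing.unit := UA o1 o2.
have Uc : c \is a GRing.unit := UA o2 o1.
have Ud : d \is a GRing.unit := UA o2 o2.
have m2 (x y z w : 'I_3) : (x < y)%N -> (z < w)%N -> mx_invertible (mxsub (sel2 x y) (sel2 z w) A).
  by move=> h1 h2; apply: Hsub; apply: sel2_homo.
have mrow (x y z w : 'I_3) : (x < y)%N -> (z < w)%N -> A x z = 1 -> A x w = 1 -> A y w - A y z \is a GRing.unit.
  by move=> h1 h2 e1 e2; have := inv2_row _ (m2 x y z w h1 h2); rewrite !mxE /=; apply.
have mcol (x y z w : 'I_3) : (x < y)%N -> (z < w)%N -> A x z = 1 -> A y z = 1 -> A y w - A x w \is a GRing.unit.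
  by move=> h1 h2 e1 e2; have := inv2_col _ (m2 x y z w h1 h2); rewrite !mxE /=; apply.
have Ua1 : a - 1 \is a GRing.unit.
  by have := mrow 0 o1 0 o1 isT isT (hA 0).1 (hA o1).1; rewrite (hA o1).2.
have Ub1 : b - 1 \is a GRing.unit.
  by have := mrow 0 o1 0 o2 isT isT (hA 0).1 (hA o2).1; rewrite (hA o1).2.
have Uc1 : c - 1 \is a GRing.unit.
  by have := mrow 0 o2 0 o1 isT isT (hA 0).1 (hA o1).1; rewrite (hA o2).2.
have Ud1 : d - 1 \is a GRing.unit.
  by have := mrow 0 o2 0 o2 isT isT (hA 0).1 (hA o2).1; rewrite (hA o2).2.
have Uba : b - a \is a GRing.unit by apply: (mrow 0 o1 o1 o2 isT isT (hA o1).1 (hA o2).1).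
have Udc : d - c \is a GRing.unit by apply: (mrow 0 o2 o1 o2 isT isT (hA o1).1 (hA o2).1).
have Uca : c - a \is a GRing.unit by apply: (mcol o1 o2 0 o1 isT isT (hA o1).2 (hA o2).2).
have Udb : d - b \is a GRing.unit by apply: (mcol o1 o2 0 o2 isT isT (hA o1).2 (hA o2).2).
have [T [[LT1 LT2 LT3 LT4] [TL1 TL2 TL3 TL4]]] := inv2_rel _ (m2 o1 o2 o1 o2 isT isT).
rewrite !mxE in LT1 LT2 LT3 LT4 TL1 TL2 TL3 TL4.
pose t00 := T 0 0; pose t01 := T 0 1; pose t10 := T 1 0; pose t11 := T 1 1.
have {LT1}LT1 : a * t00 + b * t10 = 1 := LT1.
have {LT2}LT2 : a * t01 + b * t11 = 0 := LT2.
have {LT3}LT3 : c * t00 + d * t10 = 0 := LT3.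
have {LT4}LT4 : c * t01 + d * t11 = 1 := LT4.
have {TL1}TL1 : t00 * a + t01 * c = 1 := TL1.
have {TL2}TL2 : t00 * b + t01 * d = 0 := TL2.
have {TL3}TL3 : t10 * a + t11 * c = 0 := TL3.
have {TL4}TL4 : t10 * b + t11 * d = 1 := TL4.
have Ainv : mx_invertible A by have := Hsub 3%N id id id_homo id_homo; rewrite (mxsub_id A).
have allA : allunit A by apply/allunitP.
rewrite AE in Ainv HJ2 allA *.
have [B [hJB [AB BA]]] := J1_inv _ Ainv.
have [[hB1 hB2 hB3 hB4] [hB5 hB6 hB7 hB8] [eB01 eB02 eB10 eB20 eB00]] := pack_hat _ _ _ _ _ _ AB BA.
have H0E : H0 = hat3 a^-1 c^-1 b^-1 d^-1.
  move: HJ2; rewrite J2_some // => -[<-]; apply/matrixP => i j; rewrite !mxE.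
  by case: (ord3P i) => [->|[->|->]]; case: (ord3P j) => [->|[->|->]]; rewrite /= ?invr1.
subst H0.
have [K [hJK [HK KH]]] := J1_inv _ HHinv.
have [[hK1 hK2 hK3 hK4] [hK5 hK6 hK7 hK8] [eK01 eK02 eK10 eK20 eK00]] := pack_hat _ _ _ _ _ _ HK KH.
have [[NI1 NI2 NI3 NI4] [NI5 NI6 NI7 NI8] S1] := pack_T _ a b c d _ _ _ _ Ua Ub Uc Ud LT1 LT2 LT3 LT4 TL1 TL2 TL3 TL4.
have [B00sg sgB00] := pack_hatT _ _ _ _ _ _ AB BA _ _ _ _ LT1 LT2 LT3 LT4 TL1 TL2 TL3 TL4.
have [K00tau tauK00] := pack_hatT _ _ _ _ _ _ HK KH _ _ _ _ NI1 NI2 NI3 NI4 NI5 NI6 NI7 NI8.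

have UsqB : (d - 1) - (b - 1) \is a GRing.unit by rewrite diff1.
have UsrB : (d - 1) - (c - 1) \is a GRing.unit by rewrite diff1.
have UqpB : (b - 1) - (a - 1) \is a GRing.unit by rewrite diff1.
have UprB : (a - 1) - (c - 1) \is a GRing.unit by rewrite diff1 -[a - c]opprB unitrN.
have [[UB11 UB12 UB21 UB22] [UBab UBag UBbd UBgd]] :=
  pack_U _ _ _ _ _ _ _ _ _ hB1 hB2 hB3 hB4 hB5 hB6 hB7 hB8 Ua1 Ub1 Uc1 Ud1 UsqB UsrB UqpB UprB.
have Up' : a^-1 - 1 \is a GRing.unit := USinv _ _ Ua Ua1.
have Uq' : c^-1 - 1 \is a GRing.unit := USinv _ _ Uc Uc1.
have Ur' : b^-1 - 1 \is a GRing.unit := USinv _ _ Ub Ub1.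
have Us' : d^-1 - 1 \is a GRing.unit := USinv _ _ Ud Ud1.
have Usq' : (d^-1 - 1) - (c^-1 - 1) \is a GRing.unit by rewrite diffinv // uM3 ?uV // -[c - d]opprB unitrN.
have Usr' : (d^-1 - 1) - (b^-1 - 1) \is a GRing.unit by rewrite diffinv // uM3 ?uV // -[b - d]opprB unitrN.
have Uqp' : (c^-1 - 1) - (a^-1 - 1) \is a GRing.unit by rewrite diffinv // uM3 ?uV // -[a - c]opprB unitrN.
have Upr' : (a^-1 - 1) - (b^-1 - 1) \is a GRing.unit by rewrite diffinv // uM3 ?uV.
have [[UK11 UK12 UK21 UK22] [UKab UKag UKbd UKgd]] :=
  pack_U _ _ _ _ _ _ _ _ _ hK1 hK2 hK3 hK4 hK5 hK6 hK7 hK8 Up' Uq' Ur' Us' Usq' Usr' Uqp' Upr'.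
pose sg := 1 - (t00 + t01 + t10 + t11).
have [UB00 B00i] := two_inv B00sg sgB00.
have [UK00 K00i] := two_inv K00tau tauK00.
have Usg : sg \is a GRing.unit by rewrite /sg -B00i uV.
have hsg : (1 + (B o1 o1 + B o1 o2 + B o2 o1 + B o2 o2)) * sg = 1 by rewrite -eB00.
have [PE11 PE12 PE21 PE22] :=
  pack_PE _ _ _ _ _ _ _ _ _ hB1 hB2 hB3 hB4 hB5 hB6 hB7 hB8 Ua1 Ub1 Uc1 Ud1 UsqB UsrB UqpB UprB sg hsg.
have allB : allunit B.
  apply/allunitP => i j.
  case: (ord3P i) => [->|[->|->]]; case: (ord3P j) => [->|[->|->]];
  by rewrite ?eB01 ?eB02 ?eB10 ?eB20 ?unitrN.
have uB i j : B i j \is a GRing.unit by move/allunitP: allB; apply.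
have allLB : allunit (LamL B).
  by apply/allunitP => i j; rewrite mxE; apply: uM; [apply: uM3|]; rewrite ?unitrV; apply: uB.
have Phi1E : (\matrix_(j, k) ((LamL B) k j)^-1) =
   hat3 (1 + (d^-1 - 1)^-1 * sg) (1 + (c^-1 - 1)^-1 * sg) (1 + (b^-1 - 1)^-1 * sg) (1 + (a^-1 - 1)^-1 * sg).
  apply/matrixP => i j; rewrite !mxE invLam //.
  case: (ord3P i) => [->|[->|->]]; case: (ord3P j) => [->|[->|->]]; rewrite /= ?cancel1 ?cancel2 //.
  - by rewrite eB01 eB10 B00i PE11 Sinv // mulNr.
  - by rewrite eB01 eB20 B00i PE12 Sinv // mulNr.
  - by rewrite eB02 eB10 B00i PE21 Sinv // mulNr.
  - by rewrite eB02 eB20 B00i PE22 Sinv // mulNr.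
have allPhi1 : allunit (hat3 (1 + (d^-1 - 1)^-1 * sg) (1 + (c^-1 - 1)^-1 * sg) (1 + (b^-1 - 1)^-1 * sg) (1 + (a^-1 - 1)^-1 * sg)).
  by rewrite -Phi1E; apply/allunitP => i j; rewrite mxE unitrV; move/allunitP: allLB; apply.
have PhiA : Phi (hat3 a b c d) = Some (hat3 (1 + (d^-1 - 1)^-1 * sg) (1 + (c^-1 - 1)^-1 * sg)
                                          (1 + (b^-1 - 1)^-1 * sg) (1 + (a^-1 - 1)^-1 * sg)).
  by rewrite /Phi hat3_hatM allA hJB allB J2_some // Phi1E.
have [[QQ1 QQ2 QQ3 QQ4] [QQ5 QQ6 QQ7 QQ8]] :=
  pack_QQ _ _ _ _ _ _ _ _ _ hK1 hK2 hK3 hK4 hK5 hK6 hK7 hK8 Up' Uq' Ur' Us' Usq' Usr' Uqp' Upr'.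
have [c01 c00] := conj01 _ Usg.
have g1 := hatQ_l _ _ _ _ _ _ Usg QQ1.
have g2 := hatQ_l _ _ _ _ _ _ Usg QQ2.
have g3 := hatQ_l _ _ _ _ _ _ Usg QQ3.
have g4 := hatQ_l _ _ _ _ _ _ Usg QQ4.
have g5 := hatQ_r _ _ _ _ _ _ Usg QQ5. rewrite c01 in g5.
have g6 := hatQ_r _ _ _ _ _ _ Usg QQ6. rewrite c00 in g6.
have g7 := hatQ_r _ _ _ _ _ _ Usg QQ7. rewrite c00 in g7.
have g8 := hatQ_r _ _ _ _ _ _ Usg QQ8. rewrite c01 in g8.
have [PC CP] := pack_hatinv _ _ _ _ _ _ _ _ _ g1 g2 g3 g4 g5 g6 g7 g8.

set C := hatinv _ _ _ _ in PC CP.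
have hJC := J1_some _ _ PC CP.
have [[X11 X12 X21 X22] [X01 X02 X10 X20]] :=
  pack_X _ _ _ _ _ _ _ _ _ hK1 hK2 hK3 hK4 hK5 hK6 hK7 hK8 Up' Uq' Ur' Us' Usq' Usr' Uqp' Upr' sg.
rewrite eK00 in K00tau.
have X00 := pack_K _ a b c d t00 t01 t10 t11 _ _ _ _ _ hK1 hK2 hK3 hK4 hK5 hK6 hK7 hK8 K00tau NI5 NI6 S1 Usg.
pose dv (i : 'I_3) := match (i : nat) with
  | 0%N => ((a^-1 - 1) - (b^-1 - 1)) * (K o1 o1 + K o1 o2)
  | 1%N => - ((b^-1 - 1) * K o1 o1) | _ => (a^-1 - 1) * K o1 o2 end.
pose ev (i : 'I_3) := match (i : nat) with
  | 0%N => (K o1 o1 + K o2 o1) * ((c^-1 - 1) - (a^-1 - 1))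
  | 1%N => K o1 o1 * (c^-1 - 1) | _ => - (K o2 o1 * (a^-1 - 1)) end.
have hC i j : C i j = sg^-1 * dv i * (K j i)^-1 * ev j.
  rewrite /C !mxE.
  case: (ord3P i) => [->|[->|->]]; case: (ord3P j) => [->|[->|->]] /=.
  - by rewrite K00i.
  - by rewrite eK10.
  - by rewrite eK20.
  - by rewrite eK01.
  - exact: X11.
  - exact: X12.
  - by rewrite eK02.
  - exact: X21.
  - exact: X22.
clearbody C.
have Udv i : dv i \is a GRing.unit.
  by case: (ord3P i) => [->|[->|->]] /=; rewrite ?unitrN uM.
have Uev i : ev i \is a GRing.unit.
  by case: (ord3P i) => [->|[->|->]] /=; rewrite ?unitrN uM.
have allK : allunit K.
  apply/allunitP => i j.
  case: (ord3P i) => [->|[->|->]]; case: (ord3P j) => [->|[->|->]];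
  by rewrite ?eK01 ?eK02 ?eK10 ?eK20 ?unitrN.
have uK i j : K i j \is a GRing.unit by move/allunitP: allK; apply.
have uC i j : C i j \is a GRing.unit.
  by rewrite hC; apply: uM; [apply: uM3|]; rewrite ?unitrV.
have allC : allunit C by apply/allunitP.
have allLC : allunit (LamL C).
  by apply/allunitP => i j; rewrite mxE; apply: uM; [apply: uM3|]; rewrite ?unitrV.
have PhiPhi1 : Phi (hat3 (1 + (d^-1 - 1)^-1 * sg) (1 + (c^-1 - 1)^-1 * sg) (1 + (b^-1 - 1)^-1 * sg) (1 + (a^-1 - 1)^-1 * sg))
   = Some (\matrix_(j, k) ((LamL C) k j)^-1).
  by rewrite /Phi hat3_hatM allPhi1 hJC allC J2_some.
have PhiInvA : PhiInv (hat3 a b c d) = Some (LamR K).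
  by rewrite /PhiInv hat3_hatM /Jinv HJ2 hJK allK.
have Ux : (dv 0)^-1 * sg \is a GRing.unit by rewrite uM ?unitrV.
have P2E : (\matrix_(j, k) ((LamL C) k j)^-1) = conjx ((dv 0)^-1 * sg) (LamR K).
  apply/matrixP => j k; rewrite !mxE invLam //.
  exact: (final_conj C K sg dv ev Usg Udv Uev uK hC).
exists ((dv 0)^-1 * sg), (\matrix_(j, k) ((LamL C) k j)^-1), (LamR K).
split=> //; split; first by rewrite /Phi2 PhiA PhiPhi1.
split=> //; split=> //.
rewrite P2E.
set x := (dv 0)^-1 * sg.
exists x^-1%:M, x%:M, x^-1%:M.
split; first exact: scalar_mx_is_diag.
split; first exact: scalar_mx_is_diag.
split; first by rewrite -scalar_mxM mulVr.
split; first by rewrite -scalar_mxM mulrV.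
split; first by exists x%:M; rewrite -!scalar_mxM mulrV ?mulVr.
apply/matrixP => i j; rewrite scal_mul !mxE.
exact: conjK Ux.
Qed.
End MainS.

Theorem theorem3 (R : unitRingType) (A : 'M[R]_3) :
  inShat A ->
  exists (x : R) (P2 Pinv : 'M[R]_3),
    x \is a GRing.unit /\
    Phi2 A = Some P2 /\ PhiInv A = Some Pinv /\
    P2 = conjx x Pinv /\ mxsim P2 Pinv.
Proof. exact: main. Qed.
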